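(* (a) Let $\mathbb{X}$ be a $0$-dimensional Polish space and $(C^\varepsilon_i)_{(\varepsilon,i)\in2\times\omega}$ a family of pairwise disjoint clopen subsets of $\mathbb{X}$; put $R:=\bigcup_{i\in\omega}C^0_i\times C^1_i$ and $Z:=\mathbb{X}\setminus\bigcup_{(\varepsilon,i)}C^\varepsilon_i$. Assume $Z\neq\emptyset$ and that no clopen set $D\subseteq\mathbb{X}$ meeting $Z$ satisfies $R\cap D^2=\emptyset$. Then there is no continuous $c:\mathbb{X}\to\omega$ with $c(x)\neq c(y)$ for all $(x,y)\in R$. (b) There exists a family of pairwise disjoint clopen subsets of $2^\omega$ indexed by $2\times\omega$ satisfying the hypotheses of (a). *)

(* Defs.v *)
From HB Require Import structures.
From mathcomp Require Import all_boot all_algebra all_classical all_reals all_analysis.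
Set Implicit Arguments. Unset Strict Implicit. Unset Printing Implicit Defensive.
Local Open Scope classical_set_scope.

(* 0-dimensional in the usual (descriptive set theory) sense:
   the clopen sets form a base of the topology. *)
Definition clopen_base (T : topologicalType) : Prop :=
  forall (x : T) (U : set T), nbhs x U -> exists V : set T, [/\ clopen V, V x & V `<=` U].

(* Polish space presented by a compatible complete metric:
   a complete (pseudo)metric space which is Hausdorff (so a metric)
   and second countable (equivalently separable). *)
Definition polish_metric (R : realType) (T : completePseudoMetricType R) : Prop :=
  hausdorff_space T /\ @second_countable T.

(* The relation R = U_i C^0_i x C^1_i  (0 = false, 1 = true). *)
Definition relR (T : Type) (C : bool -> nat -> set T) : set (T * T) :=
  [set p | exists i, C false i p.1 /\ C true i p.2].

Definition setZ (T : Type) (C : bool -> nat -> set T) : set T :=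
  [set x | forall e i, ~ C e i x].

Definition good_family (T : topologicalType) (C : bool -> nat -> set T) : Prop :=
  [/\ (forall e i, clopen (C e i)),
      (forall e i e' i', (e, i) <> (e', i') -> C e i `&` C e' i' = set0),
      setZ C !=set0 &
      ~ (exists D : set T, [/\ clopen D, D `&` setZ C !=set0 &
                               relR C `&` (D `*` D) = set0])].

(* Main.v *)
Require Import Defs.
From HB Require Import structures.
From mathcomp Require Import all_boot all_algebra all_classical all_reals all_analysis.
Local Open Scope classical_set_scope.
Lemma partA :
  (forall (R : realType) (T : completePseudoMetricType R),
      polish_metric T -> clopen_base T ->
      forall C : bool -> nat -> set T, good_family C ->
      ~ (exists c : T -> nat, continuous c /\
           (forall x y, relR C (x, y) -> c x <> c y))).
Proof.
move=> R T _ _ C [_ _ [z Zz] noD] [c [cc cR]].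
apply: noD; exists (c @^-1` [set c z]); split.
- apply: preimage_clopen => //; split; [exact: discrete_open|exact: discrete_closed].
- by exists z.
- apply/seteqP; split => [[x y] [/= Rxy [Dx Dy]]|//].
  by apply: (cR _ _ Rxy); rewrite Dx Dy.
Qed.

Definition Cc (e : bool) (i : nat) : set cantor_space :=
  [set x | [/\ x i = true, x i.+1 = e & forall j, (j < i)%N -> x j = false]].

Lemma coord_clopen (j : nat) (b : bool) : clopen [set x : cantor_space | x j = b].
Proof.
apply: (@preimage_clopen _ _ (fun x : cantor_space => x j) [set b]).
  split; [exact: discrete_open|exact: discrete_closed].
exact: (@proj_continuous nat (fun _ => bool) j).
Qed.

Lemma pref_clopen (i : nat) :
  clopen [set x : cantor_space | forall j, (j < i)%N -> x j = false].
Proof.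
elim: i => [|i IH].
  have -> : [set x : cantor_space | forall j, (j < 0)%N -> x j = false] = setT.
    by apply/seteqP; split => // x _ j.
  exact: clopenT.
have -> : [set x : cantor_space | forall j, (j < i.+1)%N -> x j = false] =
  [set x : cantor_space | forall j, (j < i)%N -> x j = false] `&` [set x | x i = false].
  apply/seteqP; split => x /=.
    by move=> H; split => [j ji|]; apply: H => //; apply: ltnW.
  move=> [H1 H2] j; rewrite ltnS leq_eqVlt => /orP[/eqP->//|]; exact: H1.
apply: clopenI; [exact: IH|exact: coord_clopen].
Qed.

Lemma Cc_clopen e i : clopen (Cc e i).
Proof.
have -> : Cc e i = [set x | x i = true] `&` [set x | x i.+1 = e] `&`
   [set x : cantor_space | forall j, (j < i)%N -> x j = false].
  by apply/seteqP; split => x /=; [case| case => -[]].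
apply: clopenI; last exact: pref_clopen.
apply: clopenI; exact: coord_clopen.
Qed.

Lemma Cc_disj e i e' i' : (e, i) <> (e', i') -> Cc e i `&` Cc e' i' = set0.
Proof.
move=> neq; apply/seteqP; split => // x [[xi xe xj] [xi' xe' xj']].
have ii : i = i'.
  case: (ltngtP i i') => // H.
  - by move: (xj' _ H); rewrite xi.
  - by move: (xj _ H); rewrite xi'.
by apply: neq; subst i'; rewrite -xe -xe'.
Qed.

Definition zero : cantor_space := fun _ => false.

Lemma setZ_zero x : setZ Cc x -> x = zero.
Proof.
move=> Zx; apply: functional_extensionality_dep => n; rewrite /zero.
apply/negbTE/negP => xn.
have ex : exists k, x k by exists n.
case: (ex_minnP ex) => i xi imin.
apply: (Zx (x i.+1) i); split => // j ji.
apply/negbTE/negP => xj; move: (imin j xj); rewrite leqNgt ji.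
by [].
Qed.

Lemma cvg_zero (a : nat -> cantor_space) :
  (forall t, \forall k \near \oo, a k t = false) -> a @ \oo --> zero.
Proof.
move=> H.
have := (@pointwise_cvgP nat bool (a @ \oo) zero _).2.
apply => t.
move=> U /= /principal_filterP Uf.
apply: filterS (H t) => k /= ->. exact: Uf.
Qed.
Lemma partB : exists C : bool -> nat -> set cantor_space, good_family C.
Proof.
exists Cc; split.
- exact: Cc_clopen.
- exact: Cc_disj.
- by exists zero => e i [].
move=> [D [[oD cD] [z [Dz Zz]] RD]].
rewrite (setZ_zero _ Zz) in Dz.
have nD : nbhs zero D by apply: open_nbhs_nbhs.
pose a k : cantor_space := fun j => j == k.
pose b k : cantor_space := fun j => (j == k) || (j == k.+1).
have ca : a @ \oo --> zero.
  apply: cvg_zero => t; exists t.+1 => // k /= tk.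
  by rewrite /a; apply/negbTE; rewrite neq_ltn tk.
have cb : b @ \oo --> zero.
  apply: cvg_zero => t; exists t.+1 => // k /= tk.
  rewrite /b; apply/norP; split; rewrite neq_ltn; apply/orP; left => //.
  by rewrite ltnS ltnW.
have [N _ HN] := ca _ nD.
have [M _ HM] := cb _ nD.
pose k := maxn N M.
have Dak : D (a k) by apply: HN; rewrite /= leq_maxl.
have Dbk : D (b k) by apply: HM; rewrite /= leq_maxr.
move/seteqP: RD => [+ _] => /(_ (a k, b k)); apply; split => //.
exists k; split.
- split; rewrite /a /=.
  + exact: eqxx.
  + by apply/negbTE; rewrite neq_ltn ltnSn orbT.
  + by move=> j jk; apply/negbTE; rewrite neq_ltn jk.
- split; rewrite /b /= ?eqxx ?orbT //.
  move=> j jk; apply/norP; split; rewrite neq_ltn ?jk //.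
  by rewrite (ltn_trans jk).
Qed.

Theorem lemma3p2 :
  (forall (R : realType) (T : completePseudoMetricType R),
      polish_metric T -> clopen_base T ->
      forall C : bool -> nat -> set T, good_family C ->
      ~ (exists c : T -> nat, continuous c /\
           (forall x y, relR C (x, y) -> c x <> c y)))
  /\ (exists C : bool -> nat -> set cantor_space, good_family C).
Proof. split; [exact: partA | exact: partB]. Qed.
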